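(* Let $\alpha\in\mathbb R$ and $n\ge1$. There is a one-to-one correspondence between $(2n+1)$-dimensional $\alpha$-coK\''ahler Lie algebras $(\mathfrak g,\varphi,\xi,\eta,g)$ and $2n$-dimensional K\''ahler Lie algebras $(\mathfrak h,J,h)$ together with a derivation $D\in\mathrm{Der}(\mathfrak h)$ such that $D+\alpha I$ is an infinitesimal symplectic transformation and $DJ=JD$. The correspondence is $\mathfrak h=\ker\eta$, $J=\varphi|_{\mathfrak h}$, $h=g|_{\mathfrak h\times\mathfrak h}$, $D=\mathrm{ad}_\xi|_{\mathfrak h}$, with inverse $\mathfrak g=\mathbb R\xi\oplus\mathfrak h$, $[x,y]=[x,y]_{\mathfrak h}$, $[\xi,x]=Dx$, $\eta(\xi)=1$, $\eta|_{\mathfrak h}=0$, $\varphi(\xi)=0$, $\varphi|_{\mathfrak h}=J$, $g(\xi,\cdot)=\eta$, $g|_{\mathfrak h\times\mathfrak h}=h$.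
   Context: For a Lie algebra, $d\eta(x,y)=-\eta([x,y])$ and $d\omega(x,y,z)=-\omega([x,y],z)-\omega([y,z],x)-\omega([z,x],y)$. An almost contact metric structure on a $(2n+1)$-dimensional Lie algebra $\mathfrak g$ is $(\varphi,\xi,\eta,g)$ with $\eta(\xi)=1$, $\varphi^2=-I+\eta\otimes\xi$, $\eta\circ\varphi=0$, $g$ positive definite with $g(\varphi x,\varphi y)=g(x,y)-\eta(x)\eta(y)$; $\Phi(x,y)=g(x,\varphi y)$. It is almost $\alpha$-coK\''ahler if $\eta\wedge\Phi^n\neq0$, $d\eta=0$, $d\Phi=2\alpha\,\eta\wedge\Phi$; it is $\alpha$-coK\''ahler if moreover it is normal, i.e. $N_\varphi+2d\eta\otimes\xi=0$, where $N_\varphi(x,y)=\varphi^2[x,y]+[\varphi x,\varphi y]-\varphi[\varphi x,y]-\varphi[x,\varphi y]$. An almost K\''ahler structure on a $2n$-dimensional Lie algebra $\mathfrak h$ is $(J,h)$, $J^2=-I$, $h$ positive definite with $h(Jx,Jy)=h(x,y)$, such that $\Omega(x,y)=h(x,Jy)$ is closed and nondegenerate; it is K\''ahler if moreover $N_J=0$. A linear $\theta$ on $\mathfrak h$ is an infinitesimal symplectic transformation if $(x,y)\mapsto\Omega(\theta x,y)$ is symmetric. *)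

(* Defs.v *)
From HB Require Import structures.
From mathcomp Require Import all_boot all_order fingroup perm all_algebra.
From mathcomp Require Import reals.
Set Implicit Arguments. Unset Strict Implicit. Unset Printing Implicit Defensive.
Import Order.TTheory GRing.Theory Num.Theory.
Local Open Scope ring_scope.

Section LieDefs.
Variable R : realType.

Definition vdim (V : vectType R) : nat := \dim (fullv : {vspace V}).

Section Linear.
Variables U W : lmodType R.
Definition lin_map (f : U -> W) := forall (a : R) x y, f (a *: x + y) = a *: f x + f y.
End Linear.

Section OnV.
Variable V : vectType R.

Definition lin_form (f : V -> R) := forall (a : R) x y, f (a *: x + y) = a * f x + f y.
Definition bilin_form (b : V -> V -> R) :=
  (forall z, lin_form (fun x => b x z)) /\ (forall x, lin_form (b x)).
Definition bilin_map (br : V -> V -> V) :=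
  (forall z, lin_map (fun x => br x z)) /\ (forall x, lin_map (br x)).
Definition inner_product (b : V -> V -> R) :=
  [/\ bilin_form b, (forall x y, b x y = b y x) & (forall x, x != 0 -> 0 < b x x)].

Definition lie_bracket (br : V -> V -> V) :=
  [/\ bilin_map br, (forall x, br x x = 0)
    & (forall x y z, br x (br y z) + br y (br z x) + br z (br x y) = 0)].

Definition d1 (br : V -> V -> V) (eta : V -> R) (x y : V) : R := - eta (br x y).
Definition d2 (br : V -> V -> V) (om : V -> V -> R) (x y z : V) : R :=
  - om (br x y) z - om (br y z) x - om (br z x) y.
Definition wedge12 (eta : V -> R) (om : V -> V -> R) (x y z : V) : R :=
  eta x * om y z + eta y * om z x + eta z * om x y.
(* the (2n+1)-form eta /\ om^n evaluated on (x_0, ..., x_{2n}) *)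
Definition wedge_top (n : nat) (eta : V -> R) (om : V -> V -> R)
    (x : 'I_(n.*2.+1) -> V) : R :=
  (2%:R ^+ n)^-1 * \sum_(s : 'S_(n.*2.+1))
     (-1) ^+ (odd_perm s) * eta (x (s ord0)) *
     \prod_(i < n) om (x (s (inord i.*2.+1))) (x (s (inord i.*2.+2))).


Definition nijenhuis (br : V -> V -> V) (f : V -> V) (x y : V) : V :=
  f (f (br x y)) + br (f x) (f y) - f (br (f x) y) - f (br x (f y)).

Definition fund_form (g : V -> V -> R) (phi : V -> V) (x y : V) : R := g x (phi y).

Definition almost_contact_metric (phi : V -> V) (xi : V) (eta : V -> R)
    (g : V -> V -> R) :=
  [/\ lin_map phi, lin_form eta, eta xi = 1,
      (forall x, phi (phi x) = - x + eta x *: xi)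
    & [/\ 
      (forall x, eta (phi x) = 0),
      inner_product g
    & (forall x y, g (phi x) (phi y) = g x y - eta x * eta y)]].

Definition almost_alpha_coKahler (n : nat) (alpha : R) (br : V -> V -> V)
    (phi : V -> V) (xi : V) (eta : V -> R) (g : V -> V -> R) :=
  [/\ lie_bracket br, almost_contact_metric phi xi eta g,
      (exists x, @wedge_top n eta (fund_form g phi) x != 0),
      (forall x y, d1 br eta x y = 0)
    & (forall x y z, d2 br (fund_form g phi) x y z
                     = 2%:R * alpha * wedge12 eta (fund_form g phi) x y z)].

Definition normal_acs (br : V -> V -> V) (phi : V -> V) (xi : V) (eta : V -> R) :=
  forall x y, nijenhuis br phi x y + (2%:R * d1 br eta x y) *: xi = 0.

Definition alpha_coKahler n alpha br phi xi eta g :=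
  almost_alpha_coKahler n alpha br phi xi eta g /\ normal_acs br phi xi eta.

Definition almost_hermitian (J : V -> V) (h : V -> V -> R) :=
  [/\ lin_map J, (forall x, J (J x) = - x), inner_product h
    & (forall x y, h (J x) (J y) = h x y)].

Definition kahler (br : V -> V -> V) (J : V -> V) (h : V -> V -> R) :=
  [/\ lie_bracket br, almost_hermitian J h,
      (forall x y z, d2 br (fund_form h J) x y z = 0),
      (forall x, (forall y, fund_form h J x y = 0) -> x = 0)
    & (forall x y, nijenhuis br J x y = 0)].

Definition derivation (br : V -> V -> V) (D : V -> V) :=
  lin_map D /\ (forall x y, D (br x y) = br (D x) y + br x (D y)).

Definition inf_symplectic (om : V -> V -> R) (theta : V -> V) :=
  lin_map theta /\ (forall x y, om (theta x) y = om (theta y) x).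

Definition kahler_der (alpha : R) (br : V -> V -> V) (J : V -> V)
    (h : V -> V -> R) (D : V -> V) :=
  [/\ kahler br J h, derivation br D,
      inf_symplectic (fund_form h J) (fun x => D x + alpha *: x)
    & (forall x, D (J x) = J (D x))].

Definition ker_form (eta : V -> R) : {vspace V} := lker (linfun (eta : V -> R^o)).

Definition res_br (eta : V -> R) (br : V -> V -> V)
   (x y : subvs_of (ker_form eta)) : subvs_of (ker_form eta) :=
  vsproj (ker_form eta) (br (vsval x) (vsval y)).
Definition res_J (eta : V -> R) (phi : V -> V) (x : subvs_of (ker_form eta))
   : subvs_of (ker_form eta) := vsproj (ker_form eta) (phi (vsval x)).
Definition res_h (eta : V -> R) (g : V -> V -> R) (x y : subvs_of (ker_form eta))
   : R := g (vsval x) (vsval y).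
Definition res_D (eta : V -> R) (br : V -> V -> V) (xi : V)
   (x : subvs_of (ker_form eta)) : subvs_of (ker_form eta) :=
  vsproj (ker_form eta) (br xi (vsval x)).

End OnV.

(* ---- extension g = R xi (+) h, realised as R^o * h ---- *)
Section Ext.
Variable H : vectType R.
Definition ext_br (brH : H -> H -> H) (D : H -> H) (p q : (R^o * H)%type)
  : (R^o * H)%type := (0, brH p.2 q.2 + p.1 *: D q.2 - q.1 *: D p.2).
Definition ext_phi (J : H -> H) (p : (R^o * H)%type) : (R^o * H)%type := (0, J p.2).
Definition ext_xi : (R^o * H)%type := (1, 0).
Definition ext_eta (p : (R^o * H)%type) : R := p.1.
Definition ext_g (h : H -> H -> R) (p q : (R^o * H)%type) : R := p.1 * q.1 + h p.2 q.2.
End Ext.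

Definition coK_iso (V1 V2 : vectType R)
   (br1 : V1 -> V1 -> V1) (phi1 : V1 -> V1) (xi1 : V1) (eta1 : V1 -> R) (g1 : V1 -> V1 -> R)
   (br2 : V2 -> V2 -> V2) (phi2 : V2 -> V2) (xi2 : V2) (eta2 : V2 -> R) (g2 : V2 -> V2 -> R)
   (f : V1 -> V2) :=
  [/\ lin_map f, bijective f,
      (forall x y, f (br1 x y) = br2 (f x) (f y)),
      (forall x, f (phi1 x) = phi2 (f x))
    & [/\ f xi1 = xi2,
      (forall x, eta2 (f x) = eta1 x)
    & (forall x y, g2 (f x) (f y) = g1 x y)]].

Definition kahler_der_iso (H1 H2 : vectType R)
   (br1 : H1 -> H1 -> H1) (J1 : H1 -> H1) (h1 : H1 -> H1 -> R) (D1 : H1 -> H1)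
   (br2 : H2 -> H2 -> H2) (J2 : H2 -> H2) (h2 : H2 -> H2 -> R) (D2 : H2 -> H2)
   (f : H1 -> H2) :=
  [/\ lin_map f, bijective f,
      (forall x y, f (br1 x y) = br2 (f x) (f y))
    & [/\ (forall x, f (J1 x) = J2 (f x)),
      (forall x y, h2 (f x) (f y) = h1 x y)
    & (forall x, f (D1 x) = D2 (f x))]].

Definition iso_ext_res (V : vectType R) (xi : V) (eta : V -> R)
  (p : (R^o * subvs_of (ker_form eta))%type) : V := p.1 *: xi + vsval p.2.
Definition iso_H_ker (H : vectType R) (x : H)
  : subvs_of (ker_form (@ext_eta H)) := vsproj (ker_form (@ext_eta H)) (0, x).

End LieDefs.

Arguments wedge_top {R V} n eta om x.
Arguments almost_alpha_coKahler {R V} n alpha br phi xi eta g.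
Arguments alpha_coKahler {R V} n alpha br phi xi eta g.
Arguments ker_form {R V} eta.
Arguments res_br {R V} eta br x y.
Arguments res_J {R V} eta phi x.
Arguments res_h {R V} eta g x y.
Arguments res_D {R V} eta br xi x.
Arguments ext_br {R H} brH D p q.
Arguments ext_phi {R H} J p.
Arguments ext_xi {R H}.
Arguments ext_eta {R H} p.
Arguments ext_g {R H} h p q.
Arguments coK_iso {R V1 V2} br1 phi1 xi1 eta1 g1 br2 phi2 xi2 eta2 g2 f.
Arguments kahler_der_iso {R H1 H2} br1 J1 h1 D1 br2 J2 h2 D2 f.
Arguments iso_ext_res {R V} xi eta p.
Arguments iso_H_ker {R H} x.
Arguments vdim {R} V.

(* Main.v *)
Require Import Defs.
From HB Require Import structures.
From mathcomp Require Import all_boot all_order all_algebra.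
From mathcomp Require Import reals.
From mathcomp Require Import fingroup perm zify ring lra.
Set Implicit Arguments. Unset Strict Implicit. Unset Printing Implicit Defensive.
Import Order.TTheory GRing.Theory Num.Theory.
Local Open Scope ring_scope.

Section Gen.
Variable R : realType.

Section LM.
Variables (U W : lmodType R) (f : U -> W) (hf : lin_map f).
Lemma lmD x y : f (x + y) = f x + f y.
Proof. by have := hf 1 x y; rewrite !scale1r. Qed.
Lemma lm0 : f 0 = 0.
Proof. by have := lmD 0 0; rewrite addr0 => /eqP; rewrite -subr_eq subrr eq_sym => /eqP. Qed.
Lemma lmZ a x : f (a *: x) = a *: f x.
Proof. by have := hf a x 0; rewrite !addr0 lm0 addr0. Qed.
Lemma lmN x : f (- x) = - f x.
Proof. by rewrite -scaleN1r lmZ scaleN1r. Qed.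
Lemma lmB x y : f (x - y) = f x - f y.
Proof. by rewrite lmD lmN. Qed.
End LM.

Section LF.
Variables (V : vectType R) (f : V -> R) (hf : lin_form f).
Lemma lfD x y : f (x + y) = f x + f y.
Proof. by have := hf 1 x y; rewrite scale1r mul1r. Qed.
Lemma lf0 : f 0 = 0.
Proof. by have := lfD 0 0; rewrite addr0 => /eqP; rewrite -subr_eq subrr eq_sym => /eqP. Qed.
Lemma lfZ a x : f (a *: x) = a * f x.
Proof. by have := hf a x 0; rewrite !addr0 lf0 addr0. Qed.
Lemma lfN x : f (- x) = - f x.
Proof. by rewrite -scaleN1r lfZ mulN1r. Qed.
Lemma lfB x y : f (x - y) = f x - f y.
Proof. by rewrite lfD lfN. Qed.

Definition lfL : {linear V -> R^o} :=
  HB.pack (f : V -> R^o) (GRing.isLinear.Build R V R^o *:%R f hf).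
Lemma linfunE v : (linfun (f : V -> R^o)) v = f v.
Proof. exact: (lfunE lfL v). Qed.
Lemma memker v : (v \in lker (linfun (f : V -> R^o))) = (f v == 0).
Proof. by rewrite memv_ker linfunE. Qed.
End LF.

Lemma dimRo : dim (R^o) = 1%N. Proof. by []. Qed.

Lemma dim_cap_ker (V : vectType R) (U : {vspace V}) (f : V -> R) : lin_form f ->
  (\dim U <= (\dim (U :&: lker (linfun (f : V -> R^o)))).+1)%N.
Proof.
move=> hf; have := limg_ker_dim (linfun (f : V -> R^o)) U.
have : (\dim (linfun (f : V -> R^o) @: U) <= 1)%N.
  by rewrite -[1%N]dimRo -dimvf dimvS // subvf.
lia.
Qed.

End Gen.


Section Comb.
Variable R : realType.
Variable n : nat.
Local Notation N := n.*2.+1.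
Variables (e : 'I_N -> R) (w : 'I_N -> 'I_N -> R).
Hypothesis he : forall p, e p != 0 -> p = ord0.
Hypothesis hw : forall p q : 'I_N, w p q != 0 ->
  [/\ (0 < p)%N, (0 < q)%N, p != q & (p.-1)./2 = (q.-1)./2].
Hypothesis hanti : forall p q, w p q = - w q p.

Definition aS (i : 'I_n) : 'I_N := inord (i.*2.+1).
Definition bS (i : 'I_n) : 'I_N := inord (i.*2.+2).
Definition blk (p : 'I_N) : nat := (p.-1)./2.

Lemma aSE i : (aS i : nat) = i.*2.+1.
Proof. by rewrite inordK //; have := ltn_ord i; lia. Qed.
Lemma bSE i : (bS i : nat) = i.*2.+2.
Proof. by rewrite inordK //; have := ltn_ord i; lia. Qed.
Lemma blkA i : blk (aS i) = i. Proof. rewrite /blk aSE; lia. Qed.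
Lemma blkB i : blk (bS i) = i. Proof. rewrite /blk bSE; lia. Qed.

Lemma slot_dec (p : 'I_N) : (0 < p)%N ->
  exists i : 'I_n, [/\ blk p = i & (p = aS i \/ p = bS i)].
Proof.
move=> p0; have lt : (blk p < n)%N by rewrite /blk; have := ltn_ord p; lia.
exists (Ordinal lt); split => //.
have [h|h] : (p : nat) = (blk p).*2.+1 \/ (p : nat) = (blk p).*2.+2 by rewrite /blk; lia.
  by left; apply: ord_inj; rewrite aSE.
by right; apply: ord_inj; rewrite bSE.
Qed.

Lemma aS_inj : injective aS.
Proof. by move=> i j /(congr1 (@nat_of_ord _)); rewrite !aSE => h; apply: ord_inj; lia. Qed.
Lemma bS_inj : injective bS.
Proof. by move=> i j /(congr1 (@nat_of_ord _)); rewrite !bSE => h; apply: ord_inj; lia. Qed.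
Lemma aSbS i j : aS i != bS j.
Proof. by apply/negP=> /eqP/(congr1 (@nat_of_ord _)); rewrite aSE bSE; lia. Qed.
Lemma aS0 i : aS i != ord0.
Proof. by apply/negP=> /eqP/(congr1 (@nat_of_ord _)); rewrite aSE. Qed.
Lemma bS0 i : bS i != ord0.
Proof. by apply/negP=> /eqP/(congr1 (@nat_of_ord _)); rewrite bSE. Qed.

Definition f (s : 'S_N) : R := (-1) ^+ odd_perm s * e (s ord0) *
  \prod_(i < n) w (s (aS i)) (s (bS i)).

Definition g (s : 'S_N) (p : 'I_N) : nat := ((s p != p) + (blk (s p) != blk p))%N.
Definition mu (s : 'S_N) : nat := \sum_p g s p.

Lemma sum_lt (g1 g2 : 'I_N -> nat) p0 : (forall p, g1 p <= g2 p)%N -> (g1 p0 < g2 p0)%N ->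
  (\sum_p g1 p < \sum_p g2 p)%N.
Proof.
move=> le lt; rewrite (bigD1 p0) //= [X in (_ < X)%N](bigD1 p0) //=.
by rewrite -addSn leq_add // leq_sum.
Qed.

Lemma fs_facts s : f s != 0 ->
  s ord0 = ord0 /\ forall i, w (s (aS i)) (s (bS i)) != 0.
Proof.
rewrite /f => h; split.
  by apply: he; apply: contraNneq h => ->; rewrite mulr0 mul0r.
move=> i; apply: contraNneq h => h0.
by rewrite (bigD1 i) //= h0 mul0r mulr0.
Qed.

Lemma f_id_pos s : f s != 0 -> f s = f 1%g.
Proof.
move: {2}(mu s) (leqnn (mu s)) => m; elim: m s => [|m IH] s.
  rewrite leqn0 => /eqP m0 _.
  suff -> : s = 1%g by [].
  apply/permP => p; rewrite perm1; apply/eqP.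
  have : (g s p == 0)%N.
    by rewrite -leqn0 -m0 /mu (bigD1 p) //= leq_addr.
  by rewrite /g addn_eq0 eqb0 negbK => /andP[].
move=> hm hf.
have [s0 hw'] := fs_facts hf.
have [-> //|] := eqVneq s 1%g.
move=> /eqP sn1.
have [p sp] : exists p, s p != p.
  apply/existsP; case: (boolP [exists x, s x != x]) => //; rewrite negb_exists => /forallP hp.
  exfalso; apply: sn1; apply/permP => p; rewrite perm1; apply/eqP; have := hp p; by rewrite negbK.
have p0 : (0 < p)%N.
  rewrite lt0n; apply: contra sp => /eqP p0.
  have -> : p = ord0 by apply: ord_inj.
  by rewrite s0.
have [i [bp hp]] := slot_dec p0.
have [sa0 sb0 sab bab] := hw (hw' i).
set a := aS i in sp hp sa0 sb0 sab bab *; set b := bS i in sp hp sa0 sb0 sab bab *.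
have gle2 : forall t q, (g t q <= 2)%N by move=> t q; rewrite /g; case: (_ != _); case: (_ != _).
have [sai|sai] := eqVneq (blk (s a)) i.
-
  have [ea eb] : s a = b /\ s b = a.
    have [ja [_ ha]] := slot_dec sa0; have [jb [_ hb]] := slot_dec sb0.
    have eja : ja = i by apply: ord_inj; rewrite -sai; move: (slot_dec sa0) => _; 
      case: ha => ->; rewrite ?blkA ?blkB.
    have ejb : jb = i.
      apply: ord_inj; rewrite /= -sai; rewrite /blk in bab *; rewrite bab.
      by case: hb => ->; rewrite -/(blk _) ?blkA ?blkB.
    subst ja jb.
    case: ha => ha; case: hb => hb.
    + by move: sab; rewrite ha hb eqxx.
    + exfalso; case: hp => hp; move: sp; rewrite hp.
        by rewrite ha eqxx.
      by rewrite hb eqxx.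
    + by [].
    + by move: sab; rewrite ha hb eqxx.
  pose t := tperm a b.
  have ab : a != b by apply: aSbS.
  have tfix : forall q, q != a -> q != b -> t q = q by move=> q qa qb; rewrite tpermD // eq_sym.
  have hf' : f (t * s)%g = f s.
    rewrite /f odd_permM odd_tperm ab signr_addb /= !permM.
    rewrite tfix ?(eq_sym ord0) ?aS0 ?bS0 //.
    rewrite (bigD1 i) //= [in RHS](bigD1 i) //= -/a -/b !permM /t tpermL tpermR ea eb -/t.
    rewrite (hanti b a).
    rewrite (eq_bigr (fun j => w (s (aS j)) (s (bS j)))); last first.
      { move=> j ji; rewrite !permM !tfix //.
      all: rewrite /a /b; try (by rewrite aSbS); try (by rewrite eq_sym aSbS).
      all: apply: contra ji => /eqP h; apply/eqP; first [exact: aS_inj h | exact: bS_inj h]. }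
    rewrite -ea -eb; set P := \prod_(j | _) _.
    by rewrite -!mulrA expr1 mulN1r mulNr !mulrN.
  rewrite -hf'; rewrite -hf' in hf.
  rewrite (IH (t*s)%g _ hf) // -ltnS (leq_trans _ hm) // /mu (@sum_lt _ _ a) //.
    move=> q; rewrite /g permM.
    have [->|qa] := eqVneq q a; first by rewrite /t tpermL eb !eqxx.
    have [->|qb] := eqVneq q b; first by rewrite /t tpermR ea !eqxx.
    by rewrite tfix.
  by rewrite /g permM /t tpermL eb !eqxx ea eq_sym ab.
-
  set q := (s^-1)%g a.
  have sq : s q = a by rewrite /q permKV.
  have q0 : (0 < q)%N.
    rewrite lt0n; apply/negP => /eqP q0.
    have : q = ord0 by apply: ord_inj.
    by move=> h; move: sq; rewrite h s0 => h'; move: (aS0 i); rewrite -/a -h' eqxx.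
  have [j [bq hq]] := slot_dec q0.
  have [sc0 sd0 scd bcd] := hw (hw' j).
  set c := aS j in hq sc0 sd0 scd bcd *; set d := bS j in hq sc0 sd0 scd bcd *.
  have bsc : blk (s c) = i /\ blk (s d) = i.
    have e1 : blk (s c) = blk (s d) := bcd.
    suff h : blk (s c) = i by split; rewrite -?e1.
    case: hq => hq; first by rewrite -hq sq /a blkA.
    by rewrite e1 -hq sq /a blkA.
  have ji : j != i.
    apply/negP => /eqP eji; move: hq; rewrite /c /d eji -/a -/b.
    case=> hq; move: sai; rewrite hq in sq.
      by rewrite sq /a blkA eqxx.
    by rewrite /blk bab -/(blk _) sq /a blkA eqxx.
  have ac : a != c by apply/negP=> /eqP /aS_inj h; move: ji; rewrite h eqxx.
  have bd : b != d by apply/negP=> /eqP /bS_inj h; move: ji; rewrite h eqxx.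
  have ad : a != d by apply: aSbS.
  have bc : b != c by rewrite eq_sym aSbS.
  have ab : a != b by apply: aSbS.
  have cd : c != d by apply: aSbS.
  pose t := (tperm a c * tperm b d)%g.
  have tfix : forall r, r != a -> r != b -> r != c -> r != d -> t r = r.
    move=> r ra rb rc rd; rewrite permM !tpermD //; first [done | by rewrite eq_sym].
  have ta : t a = c by rewrite permM tpermL tpermD //; first [done | by rewrite eq_sym].
  have tb : t b = d by rewrite permM (@tpermD _ a c b) ?tpermL //; first [done | by rewrite eq_sym].
  have tc : t c = a by rewrite permM tpermR tpermD //; first [done | by rewrite eq_sym].
  have td : t d = b by rewrite permM (@tpermD _ a c d) ?tpermR //; first [done | by rewrite eq_sym].
  have hf' : f (t * s)%g = f s.
    have ot : odd_perm t = false by rewrite /t odd_permM !odd_tperm ac bd.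
    rewrite /f odd_permM ot /= permM tfix ?(eq_sym ord0) ?aS0 ?bS0 //.
    congr (_ * _).
    rewrite (bigD1 i) //= [in RHS](bigD1 i) //= (bigD1 j) //= [in RHS](bigD1 j) //=.
    rewrite -/a -/b -/c -/d !permM -!(permM (tperm a c) (tperm b d)) -/t ta tb tc td.
    rewrite (eq_bigr (fun k => w (s (aS k)) (s (bS k)))); last first.
      { move=> k /andP[ki kj]; rewrite !permM -!(permM (tperm a c) (tperm b d)) -/t !tfix //.
      all: try (by apply: contra ki => /eqP/aS_inj ->).
      all: try (by apply: contra ki => /eqP/bS_inj ->).
      all: try (by apply: contra kj => /eqP/aS_inj ->).
      all: try (by apply: contra kj => /eqP/bS_inj ->).
      all: try (by rewrite eq_sym aSbS).
      all: by apply/negP => /eqP h; move: (aSbS k i) (aSbS k j); rewrite -/b -/d -h eqxx. }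
    by rewrite !mulrA [w (s c) _ * _]mulrC.
  rewrite -hf'; rewrite -hf' in hf.
  have gsa : g s a = 2%N.
    rewrite /g; have -> : blk (s a) != blk a by rewrite /a blkA.
    by have -> : s a != a by apply: contra sai => /eqP ->; rewrite /a blkA.
  have hb1 : blk (s b) = blk (s a) by rewrite /blk bab.
  have gsb : g s b = 2%N.
    have h1 : blk (s b) != blk b by rewrite hb1 /b blkB.
    have h2 : s b != b by apply/negP => /eqP sb; move: h1; rewrite sb eqxx.
    by rewrite /g h1 h2.
  have gsc : g s c = 2%N.
    rewrite /g; have -> : blk (s c) != blk c by rewrite bsc.1 /c blkA eq_sym.
    have -> // : s c != c; apply/negP => /eqP h; move: ji; have := bsc.1; rewrite h /c blkA => hh.
    by move=> /negP; apply; apply/eqP; exact: ord_inj hh.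
  have gsd : g s d = 2%N.
    rewrite /g; have -> : blk (s d) != blk d by rewrite bsc.2 /d blkB eq_sym.
    have -> // : s d != d; apply/negP => /eqP h; move: ji; have := bsc.2; rewrite h /d blkB => hh.
    by move=> /negP; apply; apply/eqP; exact: ord_inj hh.
  rewrite (IH (t*s)%g _ hf) // -ltnS (leq_trans _ hm) // /mu (@sum_lt _ _ a) //.
    move=> r.
    have [->|ra] := eqVneq r a; first by rewrite gsa gle2.
    have [->|rb] := eqVneq r b; first by rewrite gsb gle2.
    have [->|rc] := eqVneq r c; first by rewrite gsc gle2.
    have [->|rd] := eqVneq r d; first by rewrite gsd gle2.
    by rewrite /g permM tfix.
  by rewrite gsa /g permM ta bsc.1 /a blkA eqxx addn0; case: (_ != _).
Qed.

Lemma sum_f_neq0 : f 1%g != 0 -> \sum_(s : 'S_N) f s != 0.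
Proof.
move=> h1.
rewrite (bigID (fun s => f s == 0)) /= big1; last by move=> s /eqP.
rewrite add0r (eq_bigr (fun _ => f 1%g)); last by move=> s hs; apply: f_id_pos.
rewrite sumr_const mulrn_eq0 negb_or h1 andbT -lt0n.
by apply/card_gt0P; exists 1%g.
Qed.

End Comb.


Section Herm.
Variable R : realType.
Variable H : vectType R.
Variables (J : H -> H) (h : H -> H -> R).
Hypothesis hJh : almost_hermitian J h.

Let hJlin : lin_map J. Proof. by case: hJh. Qed.
Lemma JJ x : J (J x) = - x. Proof. by case: hJh. Qed.
Let hip : inner_product h. Proof. by case: hJh. Qed.
Lemma hsym x y : h x y = h y x. Proof. by case: hip. Qed.
Lemma hJ2 x y : h (J x) (J y) = h x y. Proof. by case: hJh. Qed.
Lemma hpos x : x != 0 -> 0 < h x x. Proof. by case: hip => _ _; apply. Qed.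
Lemma hlinl z : lin_form (fun x => h x z). Proof. by case: hip => -[]. Qed.
Lemma hlinr x : lin_form (h x). Proof. by case: hip => -[]. Qed.
Lemma h0l z : h 0 z = 0. Proof. exact: (lf0 (hlinl z)). Qed.
Lemma h0r z : h z 0 = 0. Proof. exact: (lf0 (hlinr z)). Qed.
Lemma hNr x y : h x (- y) = - h x y. Proof. exact: (lfN (hlinr x)). Qed.
Lemma hNl x y : h (- x) y = - h x y. Proof. exact: (lfN (hlinl y)). Qed.
Lemma J0 : J 0 = 0. Proof. exact: lm0. Qed.
Lemma hJ x y : h x (J y) = - h (J x) y.
Proof. by rewrite -hJ2 JJ hNr. Qed.
Lemma hvJv v : h v (J v) = 0.
Proof. have := hJ v v; rewrite hsym => e; lra. Qed.

Lemma exists_sub (fs : nat -> H -> R) (hfs : forall i, lin_form (fs i)) m :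
  exists U : {vspace H}, (\dim (fullv : {vspace H}) <= \dim U + m)%N /\
    forall v, v \in U -> forall i, (i < m)%N -> fs i v = 0.
Proof.
elim: m => [|m [U [hd hv]]]; first by exists fullv; rewrite addn0.
exists (U :&: lker (linfun (fs m : H -> R^o)))%VS; split.
  by have := dim_cap_ker U (hfs m); lia.
move=> v; rewrite memv_cap memker // => /andP[vU /eqP fv] i; rewrite ltnS leq_eqVlt.
by case/orP => [/eqP -> //|]; apply: hv.
Qed.

Lemma hfamily n : vdim H = n.*2 -> forall k, (k <= n)%N -> exists u : nat -> H,
  (forall i, (i < k)%N -> u i != 0) /\
  (forall i j, (i < k)%N -> (j < k)%N -> i != j -> h (u i) (u j) = 0 /\ h (u i) (J (u j)) = 0).
Proof.
move=> hd; elim => [|k IH] hk; first by exists (fun _ => 0).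
have [u [u0 uo]] := IH (ltnW hk).
pose fs i := if odd i then (fun y => h y (J (u i./2))) else (fun y => h y (u i./2)).
have hfs : forall i, lin_form (fs i) by move=> i; rewrite /fs; case: (odd i); apply: hlinl.
have [U [hU hv]] := exists_sub hfs k.*2.
have U0 : U != 0%VS.
  by rewrite -dimv_eq0; move: hU hd; rewrite /vdim; lia.
have [v [v0 vU]] : exists v, v != 0 /\ v \in U.
  by exists (vpick U); rewrite vpick0 memv_pick.
have hv1 : forall i, (i < k)%N -> h v (u i) = 0.
  move=> i ik; have := hv v vU (i.*2) ltac:(lia); rewrite /fs odd_double.
  by have -> : (i.*2)./2 = i by lia.
have hv2 : forall i, (i < k)%N -> h v (J (u i)) = 0.
  move=> i ik; have := hv v vU (i.*2.+1) ltac:(lia); rewrite /fs /= odd_double /=.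
  by rewrite uphalf_double.
exists (fun i => if i == k then v else u i); split.
  move=> i; rewrite ltnS leq_eqVlt; case: (eqVneq i k) => [_ _|ik hik]; first exact: v0.
  by apply: u0.
move=> i j hi hj ij; rewrite ltnS in hi hj.
case: (eqVneq i k) => [ei|ik]; case: (eqVneq j k) => [ej|jk].
- by move: ij; rewrite ei ej eqxx.
- have jk' : (j < k)%N by rewrite ltn_neqAle jk.
  by split; [exact: hv1 | exact: hv2].
- have ik' : (i < k)%N by rewrite ltn_neqAle ik.
  split; first by rewrite hsym hv1.
  by rewrite hJ hsym hv2 ?oppr0.
- apply: uo => //; by rewrite ltn_neqAle ?ik ?jk.
Qed.
End Herm.


Section Wedge.
Variable R : realType.
Variable H : vectType R.
Variables (J : H -> H) (h : H -> H -> R).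
Hypothesis hJh : almost_hermitian J h.
Variable n : nat.
Hypothesis hd : vdim H = n.*2.

Lemma wedge_ext : exists x, wedge_top n (@ext_eta _ H) (fund_form (ext_g h) (ext_phi J)) x != 0.
Proof.
have [u [u0 uo]] := hfamily hJh hd (leqnn n).
pose x (p : 'I_(n.*2.+1)) : (R^o * H)%type :=
  if (p : nat) == 0%N then (1, 0) else (0, if odd p then u (p.-1)./2 else J (u (p.-1)./2)).
exists x.
pose e p := @ext_eta _ H (x p).
pose w p q := fund_form (ext_g h) (ext_phi J) (x p) (x q).
have wE : forall p q, w p q = h (x p).2 (J (x q).2) by move=> p q; rewrite /w /fund_form /ext_g /= mulr0 add0r.
have -> : wedge_top n (@ext_eta _ H) (fund_form (ext_g h) (ext_phi J)) x =
  (2%:R ^+ n)^-1 * \sum_(s : 'S_(n.*2.+1)) f e w s by [].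
rewrite mulf_neq0 // ?invr_eq0 ?expf_neq0 ?pnatr_eq0 //.
apply: sum_f_neq0.
- move=> p; rewrite /e /x /ext_eta; have [p0|p0] := eqVneq (p : nat) 0%N.
    by move=> _; apply: ord_inj; rewrite p0.
  by rewrite /= eqxx.
- move=> p q; rewrite wE /x.
  have [p0|p0] := eqVneq (p : nat) 0%N; first by rewrite /= (h0l hJh) eqxx.
  have [q0|q0] := eqVneq (q : nat) 0%N; first by rewrite /= (J0 hJh) ?(h0r hJh) ?eqxx //.
  rewrite /= => hne.
  have pn : ((p : nat).-1./2 < n)%N by have := ltn_ord p; lia.
  have qn : ((q : nat).-1./2 < n)%N by have := ltn_ord q; lia.
  have [bpq|bpq] := eqVneq ((p : nat).-1./2) ((q : nat).-1./2); last first.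
    exfalso; move: hne; have [o1 o2] := uo _ _ pn qn bpq.
    case: (odd p); case: (odd q).
    + by rewrite o2 eqxx.
    + by rewrite (JJ hJh) (hNr hJh) o1 oppr0 eqxx.
    + by rewrite (hJ2 hJh) o1 eqxx.
    + by rewrite (hJ hJh) (JJ hJh) (hNl hJh) opprK o2 eqxx.
  split; rewrite ?lt0n //.
  apply/negP => /eqP pq; move: hne; rewrite pq.
  case: (odd q); first by rewrite (hvJv hJh) // eqxx.
  by rewrite (hvJv hJh) // eqxx.
- by move=> p q; rewrite !wE (hJ hJh) (hsym hJh).
- rewrite /f odd_perm1 expr0 mul1r perm1 /e /x /ext_eta /= mul1r.
  rewrite prodf_seq_neq0; apply/allP => i _ /=.
  rewrite wE !perm1 /x aSE bSE /= odd_double /=.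
  rewrite doubleK.
  rewrite uphalf_double (JJ hJh) (hNr hJh) oppr_eq0.
  by apply: lt0r_neq0; apply: (hpos hJh) => //; apply: u0.
Qed.
End Wedge.


Lemma eq_coords (R : realType) (V : vectType R) (v w : V) :
  (forall i, coord (vbasis (fullv : {vspace V})) i v = coord (vbasis (fullv : {vspace V})) i w) -> v = w.
Proof.
move=> h; rewrite (coord_vbasis (memvf v)) (coord_vbasis (memvf w)).
by apply: eq_bigr => i _; rewrite h.
Qed.

Lemma scaleRo (R : realType) (a b : R) : a *: (b : R^o) = a * b. Proof. by []. Qed.
Ltac msolve := apply: eq_coords => ?;
  rewrite ?(linearD, linearB, linearN, scalarZ, linear0) ?scaleRo; ring.

Section Pairs.
Variables (R : realType) (H : vectType R).
Lemma pairD (a b : R^o) (x y : H) : ((a, x) + (b, y) : (R^o * H)%type) = (a + b, x + y). Proof. by []. Qed.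
Lemma pairZ (c : R) (a : R^o) (x : H) : (c *: ((a, x) : (R^o * H)%type)) = (c * a, c *: x). Proof. by []. Qed.
Lemma pairN (a : R^o) (x : H) : (- ((a, x) : (R^o * H)%type)) = (- a, - x). Proof. by []. Qed.
Lemma pair0 : (0 : (R^o * H)%type) = (0, 0). Proof. by []. Qed.
End Pairs.

Section Bracket.
Variables (R : realType) (V : vectType R) (br : V -> V -> V).
Hypothesis hbr : lie_bracket br.
Lemma brLl z : lin_map (fun x => br x z). Proof. by case: hbr => -[]. Qed.
Lemma brLr x : lin_map (br x). Proof. by case: hbr => -[]. Qed.
Lemma brDl x y z : br (x + y) z = br x z + br y z. Proof. exact: (lmD (brLl z)). Qed.
Lemma brDr x y z : br z (x + y) = br z x + br z y. Proof. exact: (lmD (brLr z)). Qed.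
Lemma brZl a x z : br (a *: x) z = a *: br x z. Proof. exact: (lmZ (brLl z)). Qed.
Lemma brZr a x z : br z (a *: x) = a *: br z x. Proof. exact: (lmZ (brLr z)). Qed.
Lemma brBl x y z : br (x - y) z = br x z - br y z. Proof. exact: (lmB (brLl z)). Qed.
Lemma brBr x y z : br z (x - y) = br z x - br z y. Proof. exact: (lmB (brLr z)). Qed.
Lemma brNl x z : br (- x) z = - br x z. Proof. exact: (lmN (brLl z)). Qed.
Lemma brNr x z : br z (- x) = - br z x. Proof. exact: (lmN (brLr z)). Qed.
Lemma br0l z : br 0 z = 0. Proof. exact: (lm0 (brLl z)). Qed.
Lemma br0r z : br z 0 = 0. Proof. exact: (lm0 (brLr z)). Qed.
Lemma brxx x : br x x = 0. Proof. by case: hbr. Qed.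
Lemma brA x y : br x y = - br y x.
Proof.
have := brxx (x + y); rewrite brDl !brDr !brxx add0r addr0 => /eqP.
by rewrite addr_eq0 => /eqP.
Qed.
Lemma jacobi x y z : br x (br y z) = - br y (br z x) - br z (br x y).
Proof. by case: hbr => _ _ /(_ x y z) /eqP; rewrite -addrA addr_eq0 opprD => /eqP. Qed.
End Bracket.




Section Dir2.
Variables (R : realType) (alpha : R) (H : vectType R) (brH : H -> H -> H)
  (J : H -> H) (h : H -> H -> R) (D : H -> H).
Hypothesis hk : kahler_der alpha brH J h D.

Let hK : kahler brH J h. Proof. by case: hk. Qed.
Let hbr : lie_bracket brH. Proof. by case: hK. Qed.
Let hJh : almost_hermitian J h. Proof. by case: hK. Qed.
Let hdO x y z : d2 brH (fund_form h J) x y z = 0. Proof. by case: hK. Qed.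
Let hN x y : nijenhuis brH J x y = 0. Proof. by case: hK. Qed.
Let hDer : derivation brH D. Proof. by case: hk. Qed.
Let hDL : lin_map D. Proof. by case: hDer. Qed.
Let hDbr x y : D (brH x y) = brH (D x) y + brH x (D y). Proof. by case: hDer. Qed.
Let hsymp x y : fund_form h J (D x + alpha *: x) y = fund_form h J (D y + alpha *: y) x.
Proof. by case: hk => _ _ [_]. Qed.
Let hDJ x : D (J x) = J (D x). Proof. by case: hk. Qed.
Let hJL : lin_map J. Proof. by case: hJh. Qed.

Local Notation V := (R^o * H)%type.

Lemma ext_lie : lie_bracket (ext_br brH D).
Proof.
split.
- split.
  + move=> [c z] a [a1 x1] [a2 x2]; rewrite /ext_br /= !pairZ !pairD /=.
    rewrite (brDl hbr) (brZl hbr) (lmD hDL) (lmZ hDL).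
    congr (_, _); first by rewrite mulr0 addr0.
    msolve.
  + move=> [c z] a [a1 x1] [a2 x2]; rewrite /ext_br /= !pairZ !pairD /=.
    rewrite (brDr hbr) (brZr hbr) (lmD hDL) (lmZ hDL).
    congr (_, _); first by rewrite mulr0 addr0.
    msolve.
- move=> [a x]; rewrite /ext_br /= (brxx hbr) add0r subrr //.
- move=> [a x] [b y] [c z]; rewrite /ext_br /= !pairD /=.
  rewrite !addr0; congr (_, _).
  rewrite ?(brDr hbr) ?(brNr hbr) ?(brZr hbr) ?(lmD hDL) ?(lmN hDL) ?(lmZ hDL) ?hDbr.
  rewrite (jacobi hbr x y z) !(brA hbr (D _) _).
  msolve.
Qed.

Lemma ext_acm : almost_contact_metric (ext_phi J) ext_xi (@ext_eta _ H) (ext_g h).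
Proof.
split.
- move=> a [a1 x1] [a2 x2]; rewrite /ext_phi /= !pairZ !pairD (lmD hJL) (lmZ hJL).
  by rewrite mulr0 addr0.
- by move=> a [a1 x1] [a2 x2].
- by [].
- move=> [a x]; rewrite /ext_phi /ext_eta /ext_xi /= (JJ hJh) pairZ pairN pairD.
  by rewrite scaler0 addr0 mulr1 addNr.
split.
- by [].
- split.
  + split.
    * move=> [c z] a [a1 x1] [a2 x2]; rewrite /ext_g /= (lfD (hlinl hJh z)) (lfZ (hlinl hJh z)).
      rewrite scaleRo; ring.
    * move=> [c z] a [a1 x1] [a2 x2]; rewrite /ext_g /= (lfD (hlinr hJh z)) (lfZ (hlinr hJh z)).
      rewrite scaleRo; ring.
  + by move=> [a x] [b y]; rewrite /ext_g /= mulrC (hsym hJh).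
  + move=> [a x] /= nz; rewrite /ext_g /=.
    have [x0|x0] := eqVneq x 0.
      rewrite x0 (h0l hJh) addr0.
      have a0 : a != 0 by apply: contraNneq nz => a0; rewrite a0 x0.
      by rewrite lt0r mulf_neq0 //= -expr2 sqr_ge0.
    have := hpos hJh x0; have := sqr_ge0 a; rewrite expr2; lra.
- move=> [a x] [b y]; rewrite /ext_g /ext_phi /ext_eta /= (hJ2 hJh); ring.
Qed.

Lemma ext_fund p q : fund_form (ext_g h) (ext_phi J) p q = fund_form h J p.2 q.2.
Proof. by rewrite /fund_form /ext_g /ext_phi /= mulr0 add0r. Qed.

Let hFanti x y : fund_form h J x y = - fund_form h J y x.
Proof. by rewrite /fund_form (hJ hJh) (hsym hJh). Qed.
Let hFlinl z : lin_form (fun x => fund_form h J x z). Proof. exact: (hlinl hJh). Qed.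

Lemma ext_d2 p q r : d2 (ext_br brH D) (fund_form (ext_g h) (ext_phi J)) p q r
   = 2%:R * alpha * wedge12 (@ext_eta _ H) (fund_form (ext_g h) (ext_phi J)) p q r.
Proof.
case: p q r => [a x] [b y] [c z].
rewrite /d2 /wedge12 !ext_fund /ext_br /ext_eta /=.
have := hdO x y z; rewrite /d2 => e0.
have sx := hsymp y z; have sy := hsymp z x; have sz := hsymp x y.
rewrite !(lfD (hFlinl _)) !(lfZ (hFlinl _)) in sx sy sz.
rewrite !(lfB (hFlinl _)) !(lfD (hFlinl _)) !(lfZ (hFlinl _)).
have ey : fund_form h J (D y) z = fund_form h J (D z) y - 2%:R * alpha * fund_form h J y z.
  move: sx; rewrite (hFanti z y); lra.
have ez : fund_form h J (D z) x = fund_form h J (D x) z - 2%:R * alpha * fund_form h J z x.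
  move: sy; rewrite (hFanti x z); lra.
have ex : fund_form h J (D x) y = fund_form h J (D y) x - 2%:R * alpha * fund_form h J x y.
  move: sz; rewrite (hFanti y x); lra.
have e0' : fund_form h J (brH x y) z = - fund_form h J (brH y z) x - fund_form h J (brH z x) y.
  lra.
rewrite ey ez ex e0'; ring.
Qed.

Lemma ext_normal : normal_acs (ext_br brH D) (ext_phi J) ext_xi (@ext_eta _ H).
Proof.
move=> [a x] [b y]; rewrite /nijenhuis /d1 /ext_br /ext_phi /ext_eta /ext_xi /=.
rewrite oppr0 mulr0 scale0r addr0.
have := hN x y; rewrite /nijenhuis => e0.
apply: injective_projections => /=; first by rewrite !(addr0, subr0, add0r, scale0r).
rewrite !scale0r !subr0 !(lmD hJL) ?(lmN hJL) ?(lmZ hJL) !(JJ hJh) !hDJ !(JJ hJh).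
rewrite (JJ hJh) in e0; rewrite ?(J0 hJh) -e0; msolve.
Qed.

Lemma ext_eta_lin : lin_form (@ext_eta _ H). Proof. by []. Qed.
Lemma memK2 p : (p \in ker_form (@ext_eta _ H)) = (p.1 == 0).
Proof. by rewrite /ker_form memker //; apply: ext_eta_lin. Qed.
Lemma isoval (x : H) : vsval (iso_H_ker x) = (0, x).
Proof. by rewrite /iso_H_ker vsprojK // memK2. Qed.

Lemma dir2_iso : kahler_der_iso brH J h D
           (res_br (@ext_eta _ H) (ext_br brH D)) (res_J (@ext_eta _ H) (ext_phi J))
           (res_h (@ext_eta _ H) (ext_g h)) (res_D (@ext_eta _ H) (ext_br brH D) ext_xi)
           (@iso_H_ker _ H).
Proof.
split.
- move=> a x y; apply: subvs_inj; rewrite linearP /= !isoval pairZ pairD.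
  by rewrite mulr0 addr0.
- apply: (@Bijective _ _ _ (fun u : subvs_of (ker_form (@ext_eta _ H)) => (vsval u).2)).
    by move=> x; rewrite isoval.
  move=> u; apply: subvs_inj; rewrite isoval; have := subvsP u; rewrite memK2.
  by case: (vsval u) => [a y] /= /eqP ->.
- move=> x y; apply: subvs_inj; rewrite /res_br vsprojK; last by rewrite memK2.
  by rewrite !isoval /ext_br /= !scale0r subr0 addr0.
split.
- move=> x; apply: subvs_inj; rewrite /res_J vsprojK; last by rewrite memK2.
  by rewrite !isoval.
- by move=> x y; rewrite /res_h !isoval /ext_g /= mul0r add0r.
- move=> x; apply: subvs_inj; rewrite /res_D vsprojK; last by rewrite memK2.
  by rewrite !isoval /ext_br /ext_xi /= (br0l hbr) scale1r scale0r subr0 add0r.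
Qed.

Theorem dir2 n : vdim H = n.*2 ->
     [/\ vdim (R^o * H)%type = n.*2.+1,
         alpha_coKahler n alpha (ext_br brH D) (ext_phi J) ext_xi (@ext_eta _ H)
                        (ext_g h)
       & kahler_der_iso brH J h D
           (res_br (@ext_eta _ H) (ext_br brH D)) (res_J (@ext_eta _ H) (ext_phi J))
           (res_h (@ext_eta _ H) (ext_g h)) (res_D (@ext_eta _ H) (ext_br brH D) ext_xi)
           (@iso_H_ker _ H)].
Proof.
move=> hd; split.
- by move: hd; rewrite /vdim !dimvf => <-.
- split; last exact: ext_normal.
  split.
  + exact: ext_lie.
  + exact: ext_acm.
  + by have [x hx] := wedge_ext hJh hd; exists x.
  + by move=> p q; rewrite /d1 /ext_br /ext_eta /= oppr0.
  + exact: ext_d2.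
- exact: dir2_iso.
Qed.
End Dir2.




Section Dir1.
Variables (R : realType) (alpha : R) (n : nat) (V : vectType R) (br : V -> V -> V)
  (phi : V -> V) (xi : V) (eta : V -> R) (g : V -> V -> R).
Hypothesis hc : alpha_coKahler n alpha br phi xi eta g.

Let hA : almost_alpha_coKahler n alpha br phi xi eta g. Proof. by case: hc. Qed.
Let hbr : lie_bracket br. Proof. by case: hA. Qed.
Let hacm : almost_contact_metric phi xi eta g. Proof. by case: hA. Qed.
Let hpL : lin_map phi. Proof. by case: hacm. Qed.
Let heL : lin_form eta. Proof. by case: hacm. Qed.
Let exi : eta xi = 1. Proof. by case: hacm. Qed.
Let pp x : phi (phi x) = - x + eta x *: xi. Proof. by case: hacm. Qed.
Let ep x : eta (phi x) = 0. Proof. by case: hacm => _ _ _ _ []. Qed.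
Let hip : inner_product g. Proof. by case: hacm => _ _ _ _ []. Qed.
Let gpp x y : g (phi x) (phi y) = g x y - eta x * eta y. Proof. by case: hacm => _ _ _ _ []. Qed.
Let ebr x y : eta (br x y) = 0.
Proof. by case: hA => _ _ _ /(_ x y); rewrite /d1 => /eqP; rewrite oppr_eq0 => /eqP. Qed.
Let hd2 x y z : d2 br (fund_form g phi) x y z = 2%:R * alpha * wedge12 eta (fund_form g phi) x y z.
Proof. by case: hA. Qed.
Let hN x y : nijenhuis br phi x y = 0.
Proof. by case: hc => _ /(_ x y); rewrite /d1 ebr oppr0 mulr0 scale0r addr0. Qed.

Let gsym x y : g x y = g y x. Proof. by case: hip. Qed.
Let gpos x : x != 0 -> 0 < g x x. Proof. by case: hip => _ _; apply. Qed.
Let glinl z : lin_form (fun x => g x z). Proof. by case: hip => -[]. Qed.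
Let glinr x : lin_form (g x). Proof. by case: hip => -[]. Qed.

Lemma phixi : phi xi = 0.
Proof.
have := pp (phi xi); rewrite ep scale0r addr0 [phi (phi xi)]pp exi scale1r addNr (lm0 hpL).
by move=> /eqP; rewrite eq_sym oppr_eq0 => /eqP.
Qed.
Lemma gxi v : g xi v = eta v.
Proof. have := gpp xi v; rewrite phixi (lf0 (glinl _)) exi mul1r => /eqP; rewrite eq_sym subr_eq0 => /eqP //. Qed.
Lemma gxixi : g xi xi = 1. Proof. by rewrite gxi. Qed.
Lemma Fanti x y : fund_form g phi x y = - fund_form g phi y x.
Proof.
rewrite /fund_form.
have := gpp y (phi x); rewrite ep mulr0 subr0 pp => <-.
rewrite (lfD (glinr _)) (lfN (glinr _)) (lfZ (glinr _)) gsym (gsym (phi y) xi) gxi ep mulr0 addr0.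
by rewrite opprK.
Qed.
Lemma Fxi x : fund_form g phi x xi = 0.
Proof. by rewrite /fund_form phixi (lf0 (glinr _)). Qed.

Local Notation K := (ker_form eta).
Lemma memK v : (v \in K) = (eta v == 0). Proof. exact: memker. Qed.
Lemma etaK (u : subvs_of K) : eta (vsval u) = 0.
Proof. by apply/eqP; rewrite -memK subvsP. Qed.
Lemma vbr u v : vsval (res_br eta br u v) = br (vsval u) (vsval v).
Proof. by rewrite /res_br vsprojK // memK ebr. Qed.
Lemma vJ u : vsval (res_J eta phi u) = phi (vsval u).
Proof. by rewrite /res_J vsprojK // memK ep. Qed.
Lemma vD u : vsval (res_D eta br xi u) = br xi (vsval u).
Proof. by rewrite /res_D vsprojK // memK ebr. Qed.
Lemma vFF u v : fund_form (res_h eta g) (res_J eta phi) u v = fund_form g phi (vsval u) (vsval v).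
Proof. by rewrite /fund_form /res_h vJ. Qed.


Lemma vnz (u : subvs_of K) : u != 0 -> vsval u != 0.
Proof. by apply: contraNneq => h; apply/eqP/subvs_inj; rewrite h linear0. Qed.

Ltac vpush0 := rewrite ?(raddfD, raddfB, raddfN, linearZ, linear0) /= ?(vbr, vJ, vD).
Ltac vpush := vpush0; vpush0; vpush0.

Lemma res_lie : lie_bracket (res_br eta br).
Proof.
split.
- split=> [z a x y|x a y z]; apply: subvs_inj; vpush.
    by rewrite (brDl hbr) (brZl hbr).
  by rewrite (brDr hbr) (brZr hbr).
- by move=> x; apply: subvs_inj; vpush; rewrite (brxx hbr).
- move=> x y z; apply: subvs_inj; vpush.
  by case: hbr => _ _ ->.
Qed.

Lemma res_herm : almost_hermitian (res_J eta phi) (res_h eta g).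
Proof.
split.
- by move=> a x y; apply: subvs_inj; vpush; rewrite (lmD hpL) (lmZ hpL).
- by move=> x; apply: subvs_inj; vpush; rewrite pp etaK scale0r addr0.
- split.
  + split=> [z a x y|x a y z]; rewrite /res_h; vpush.
      by rewrite (lfD (glinl _)) (lfZ (glinl _)).
    by rewrite (lfD (glinr _)) (lfZ (glinr _)).
  + by move=> x y; rewrite /res_h gsym.
  + by move=> x /vnz; rewrite /res_h; apply: gpos.
- by move=> x y; rewrite /res_h !vJ gpp !etaK mulr0 subr0.
Qed.

Lemma res_kahler : kahler (res_br eta br) (res_J eta phi) (res_h eta g).
Proof.
split.
- exact: res_lie.
- exact: res_herm.
- move=> x y z; rewrite /d2 !vFF !vbr.
  have := hd2 (vsval x) (vsval y) (vsval z); rewrite /d2 /wedge12 !etaK !mul0r !addr0 mulr0.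
  by [].
- move=> x h0; have := h0 (res_J eta phi x); rewrite vFF vJ /fund_form pp etaK scale0r addr0.
  rewrite (lfN (glinr _)) => /eqP; rewrite oppr_eq0 => /eqP gx.
  apply: contra_eq gx => /vnz /gpos; exact: lt0r_neq0.
- move=> x y; apply: subvs_inj; rewrite /nijenhuis; vpush.
  exact: (hN (vsval x) (vsval y)).
Qed.

Lemma res_der : derivation (res_br eta br) (res_D eta br xi).
Proof.
split.
- by move=> a x y; apply: subvs_inj; vpush; rewrite (brDr hbr) (brZr hbr).
- move=> x y; apply: subvs_inj; vpush.
  rewrite (jacobi hbr xi) (brA hbr (vsval y) xi) (brNr hbr) (brA hbr (vsval y) (br xi (vsval x))).
  msolve.
Qed.

Lemma res_symp : inf_symplectic (fund_form (res_h eta g) (res_J eta phi))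
    (fun x => res_D eta br xi x + alpha *: x).
Proof.
have Flinl z : lin_form (fun x => fund_form g phi x z) by move=> a x y; apply: glinl.
split.
- move=> a x y /=; apply: subvs_inj; vpush; rewrite (brDr hbr) (brZr hbr); msolve.
- move=> x y; rewrite !vFF; vpush.
  rewrite !(lfD (Flinl _)) !(lfZ (Flinl _)).
  have := hd2 xi (vsval x) (vsval y); rewrite /d2 /wedge12 exi !etaK Fxi.
  rewrite (brA hbr (vsval y) xi) (lfN (Flinl _)) (Fanti (vsval y) (vsval x)).
  move=> e; lra.
Qed.

Lemma res_DJ x : res_D eta br xi (res_J eta phi x) = res_J eta phi (res_D eta br xi x).
Proof.
apply: subvs_inj; vpush.
have := hN xi (vsval x); rewrite /nijenhuis phixi !(br0l hbr) !(lm0 hpL).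
rewrite pp ebr scale0r !addr0 subr0 => /eqP; rewrite subr_eq0 => /eqP e.
have := pp (br xi (phi (vsval x))); rewrite ebr scale0r addr0 -e (lmN hpL) => /eqP.
by rewrite eqr_opp eq_sym => /eqP.
Qed.

Lemma res_kder : kahler_der alpha (res_br eta br) (res_J eta phi) (res_h eta g)
                          (res_D eta br xi).
Proof.
split.
- exact: res_kahler.
- exact: res_der.
- exact: res_symp.
- exact: res_DJ.
Qed.

Lemma dimK : vdim V = n.*2.+1 -> vdim (subvs_of K) = n.*2.
Proof.
rewrite /vdim !dimvf => hd.
have := limg_ker_dim (linfun (eta : V -> R^o)) fullv; rewrite capfv dimvf hd.
have : (\dim (limg (linfun (eta : V -> R^o))) <= 1)%N.
  by rewrite -[1%N](dimRo R) -dimvf dimvS // subvf.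
have : (0 < \dim (limg (linfun (eta : V -> R^o))))%N.
  rewrite lt0n dimv_eq0; apply/negP => /eqP h0.
  have := memv_img (linfun (eta : V -> R^o)) (memvf xi); rewrite h0 memv0 linfunE // exi.
  by rewrite oner_eq0.
have -> : dim (subvs_of K) = \dim K by [].
rewrite /ker_form; lia.
Qed.

Lemma iso1 : coK_iso (ext_br (res_br eta br) (res_D eta br xi))
                 (ext_phi (res_J eta phi)) ext_xi ext_eta
                 (ext_g (res_h eta g))
                 br phi xi eta g (iso_ext_res xi eta).
Proof.
have ee : forall a (u : subvs_of K), eta (a *: xi + vsval u) = a.
  by move=> a u; rewrite (lfD heL) (lfZ heL) exi etaK mulr1 addr0.
split.
- move=> a [a1 u1] [a2 u2]; rewrite /iso_ext_res pairZ pairD /=; vpush; msolve.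
- apply: (@Bijective _ _ _ (fun v => ((eta v : R^o), vsproj K (v - eta v *: xi)))).
    move=> [a u]; rewrite /iso_ext_res /= ee; congr (_, _).
    by rewrite [a *: xi + _]addrC addrK vsvalK.
  move=> v; rewrite /iso_ext_res /= vsprojK; first by rewrite addrC subrK.
  by rewrite memK (lfB heL) (lfZ heL) exi mulr1 subrr.
- move=> [a u] [b v]; rewrite /iso_ext_res /ext_br /= !vbr !vD.
  rewrite scale0r add0r !(brDl hbr) !(brDr hbr) !(brZl hbr) !(brZr hbr) (brxx hbr).
  rewrite (brA hbr (vsval u) xi); msolve.
- move=> [a u]; rewrite /iso_ext_res /ext_phi /= vJ.
  by rewrite scale0r add0r (lmD hpL) (lmZ hpL) phixi scaler0 add0r.
split.
- by rewrite /iso_ext_res /ext_xi /= scale1r addr0.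
- by move=> [a u]; rewrite /iso_ext_res /ext_eta /= ee.
- move=> [a u] [b v]; rewrite /iso_ext_res /ext_g /res_h /=.
  rewrite !(lfD (glinl _)) !(lfZ (glinl _)) !(lfD (glinr _)) !(lfZ (glinr _)).
  rewrite gxixi !gxi (gsym (vsval u) xi) gxi !etaK; ring.
Qed.

Theorem dir1 : vdim V = n.*2.+1 ->
     [/\ vdim (subvs_of (ker_form eta)) = n.*2,
         kahler_der alpha (res_br eta br) (res_J eta phi) (res_h eta g)
                          (res_D eta br xi)
       & coK_iso (ext_br (res_br eta br) (res_D eta br xi))
                 (ext_phi (res_J eta phi)) ext_xi ext_eta
                 (ext_g (res_h eta g))
                 br phi xi eta g (iso_ext_res xi eta)].
Proof. by move=> hd; split; [exact: dimK | exact: res_kder | exact: iso1]. Qed.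

End Dir1.

Theorem mainTheorem7 (R : realType) (alpha : R) (n : nat) (hn : (0 < n)%N) :
  (* coKahler  ->  Kahler with derivation, and back again up to the canonical iso *)
  (forall (V : vectType R) (br : V -> V -> V) (phi : V -> V) (xi : V)
          (eta : V -> R) (g : V -> V -> R),
     vdim V = n.*2.+1 ->
     alpha_coKahler n alpha br phi xi eta g ->
     [/\ vdim (subvs_of (ker_form eta)) = n.*2,
         kahler_der alpha (res_br eta br) (res_J eta phi) (res_h eta g)
                          (res_D eta br xi)
       & coK_iso (ext_br (res_br eta br) (res_D eta br xi))
                 (ext_phi (res_J eta phi)) ext_xi ext_eta
                 (ext_g (res_h eta g))
                 br phi xi eta g (iso_ext_res xi eta)]) /\
  (* Kahler with derivation  ->  coKahler, and back again up to the canonical iso *)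
  (forall (H : vectType R) (brH : H -> H -> H) (J : H -> H) (h : H -> H -> R)
          (D : H -> H),
     vdim H = n.*2 ->
     kahler_der alpha brH J h D ->
     [/\ vdim (R^o * H)%type = n.*2.+1,
         alpha_coKahler n alpha (ext_br brH D) (ext_phi J) ext_xi (@ext_eta _ H)
                        (ext_g h)
       & kahler_der_iso brH J h D
           (res_br (@ext_eta _ H) (ext_br brH D)) (res_J (@ext_eta _ H) (ext_phi J))
           (res_h (@ext_eta _ H) (ext_g h)) (res_D (@ext_eta _ H) (ext_br brH D) ext_xi)
           (@iso_H_ker _ H)]).
Proof.
split.
- move=> V br phi xi eta g hd hc; exact: dir1 hc hd.
- move=> H brH J h D hd hk.
  have [a b c] := dir2 hk hd; split => //.
Qed.
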